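(* Let $m>n>0$ be relatively prime integers and $(r,s)\in\mathbb{Z}^2$. Then $(r,s)=\beta(m,\,m-n)$ if and only if $(s,\,r-s)=\beta(2m-n,\,m)$.
   Context: For relatively prime integers $a>b>0$, $\beta(a,b)$ denotes the Bézout coefficients given by the Euclidean algorithm: with $a=q_1b+r_1$, $b=q_2r_1+r_2$, $\dots$, $r_{k-2}=q_kr_{k-1}+r_k$, $r_{k-1}=1$, $r_k=0$ ($r_{-1}=a$, $r_0=b$), write $\begin{pmatrix}a\\ b\end{pmatrix}=M\begin{pmatrix}1\\0\end{pmatrix}$ with $M=\prod_{i=1}^k\begin{pmatrix}q_i&1\\1&0\end{pmatrix}$; then $\beta(a,b)$ is the first row of $M^{-1}$, and $\beta(a,b)=(r,s)$ satisfies $ra+sb=1$. *)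

(* Defs.v *)
From mathcomp Require Import all_boot all_order all_algebra.
Set Implicit Arguments. Unset Strict Implicit. Unset Printing Implicit Defensive.
Import GRing.Theory Num.Theory.
Local Open Scope ring_scope.

(* Quotients q_1, ..., q_k of the Euclidean algorithm on (a, b):
   a = q_1 b + r_1, b = q_2 r_1 + r_2, ..., stopping when the remainder is 0.
   The fuel b.+1 suffices since the second argument strictly decreases. *)
Fixpoint euclid_quots_fuel (fuel a b : nat) : seq nat :=
  match fuel with
  | 0 => [::]
  | f.+1 => if b == 0%N then [::] else (a %/ b)%N :: euclid_quots_fuel f b (a %% b)
  end.

Definition euclid_quots (a b : nat) : seq nat := euclid_quots_fuel b.+1 a b.

Definition qmx (q : nat) : 'M[int]_2 :=
  \matrix_(i < 2, j < 2)
    if (i == 0 :> nat) then (if (j == 0 :> nat) then q%:Z else 1)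
    else (if (j == 0 :> nat) then 1 else 0).

Definition euclid_mx (a b : nat) : 'M[int]_2 :=
  \prod_(q <- euclid_quots a b) qmx q.

Definition beta (a b : nat) : int * int :=
  let Mi := invmx (euclid_mx a b) in (Mi ord0 ord0, Mi ord0 ord_max).

(* Main.v *)
Require Import Defs.
From mathcomp Require Import all_boot all_order all_algebra.
From mathcomp Require Import zify.
Local Open Scope ring_scope.
Import GRing.Theory.

Lemma fuel_eq (f g a b : nat) : (b < f)%N -> (b < g)%N ->
  euclid_quots_fuel f a b = euclid_quots_fuel g a b.
Proof.
elim: f g a b => [|f IH] [|g] a b //= hf hg.
case: eqP => // /eqP b0.
congr (_ :: _); apply: IH.
  have := ltn_pmod a (_ : (0 < b)%N). lia.
have := ltn_pmod a (_ : (0 < b)%N). lia.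
Qed.

Definition qinv (q : nat) : 'M[int]_2 :=
  \matrix_(i < 2, j < 2)
    if (i == 0 :> nat) then (if (j == 0 :> nat) then 0 else 1)
    else (if (j == 0 :> nat) then 1 else - q%:Z).

Lemma qinvK q : qinv q *m qmx q = 1%:M.
Proof.
apply/matrixP => i j; rewrite !mxE big_ord_recl big_ord1 !mxE /=.
case: i => [[|[|i]] Hi] //; case: j => [[|[|j]] Hj] //=; rewrite ?mxE /=; lia.
Qed.

Lemma qmx_unit q : qmx q \in unitmx.
Proof. by case: (mulmx1_unit (qinvK q)). Qed.

Lemma euclid_unit a b : euclid_mx a b \in unitmx.
Proof.
rewrite /euclid_mx; apply: (big_ind (fun M : 'M[int]_2 => M \in unitmx)).
- exact: unitmx1.
- by move=> x y hx hy; rewrite -mulmxE unitmx_mul hx hy.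
- by move=> q _; exact: qmx_unit.
Qed.

Lemma invqmx q : invmx (qmx q) = qinv q.
Proof.
have := mulmxV (qmx_unit q) => h.
by rewrite -[invmx _]mul1mx -(qinvK q) -mulmxA h mulmx1.
Qed.

Lemma invmxM' (A B : 'M[int]_2) : A \in unitmx -> B \in unitmx ->
  invmx (A *m B) = invmx B *m invmx A.
Proof.
move=> uA uB.
have uC : A *m B \in unitmx by rewrite unitmx_mul uA uB.
rewrite -[invmx (A *m B)](mulmxK uA) -(mulmxK uB (invmx _ *m A)).
by rewrite -!mulmxA (mulmxA A) (mulmxA (invmx _)) mulVmx // mul1mx.
Qed.

Lemma quots_step m n : (0 < n)%N -> (n < m)%N ->
  euclid_quots (2 * m - n) m = 1%N :: euclid_quots m (m - n).
Proof.
move=> hn hm; rewrite /euclid_quots /=.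
have -> : (m == 0)%N = false by lia.
have -> : ((2 * m - n) %/ m = 1)%N.
  apply/eqP; rewrite eqn_leq; apply/andP; split.
  - rewrite -ltnS ltn_divLR; lia.
  - rewrite leq_divRL; lia.
have -> : ((2 * m - n) %% m = m - n)%N.
  have -> : (2 * m - n = (m - n) + m)%N by lia.
  rewrite modnDr modn_small //; lia.
congr (_ :: _); rewrite (fuel_eq m (m - n).+1 m (m - n)) //; lia.
Qed.

Theorem lemma2p3 (m n : nat) (r s : int) :
  (0 < n)%N -> (n < m)%N -> coprime m n ->
  ((r, s) = beta m (m - n)) <-> ((s, r - s) = beta (2 * m - n) m).
Proof.
move=> hn hm _.
have E : beta (2 * m - n) m =
  ((beta m (m - n)).2, (beta m (m - n)).1 - (beta m (m - n)).2).
  rewrite /beta /euclid_mx quots_step // big_cons -/(euclid_mx m (m - n)).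
  rewrite -mulmxE invmxM' ?qmx_unit ?euclid_unit // invqmx.
  rewrite !mxE !big_ord_recl !big_ord0 !mxE /=.
  have -> : lift ord0 ord0 = ord_max :> 'I_2 by apply/val_inj.
  by rewrite mulr0 !mulr1 !addr0 add0r mulrN1.
rewrite E; case: (beta m (m - n)) => r0 s0 /=; split.
- by case=> -> ->.
- case=> h1 h2; subst s0; congr (_, _); lia.
Qed.
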